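(* For every formula $\varphi$ of $\mathcal L^{\bigcirc}_\square$: $\varphi$ is derivable in $\mathbf{K4C}$ if and only if $\varphi$ is valid, with respect to the $d$-semantics, on every dynamic topological system $\langle X,\tau,f\rangle$ whose underlying space $\langle X,\tau\rangle$ is a $T_D$ space.
   Context: Fix a non-empty set $\mathsf{PV}$ of propositional variables. The language $\mathcal L^{\bigcirc}_\square$ is given by $\varphi::= p\mid \varphi\wedge\varphi\mid\neg\varphi\mid\square\varphi\mid\bigcirc\varphi$ with $p\in\mathsf{PV}$. Axioms and rules: Taut; K: $\square(\varphi\to\psi)\to(\square\varphi\to\square\psi)$; 4: $\square\varphi\to\square\square\varphi$; ${\rm Next}_\neg$: $\neg\bigcirc\varphi\leftrightarrow\bigcirc\neg\varphi$; ${\rm Next}_\wedge$: $\bigcirc(\varphi\wedge\psi)\leftrightarrow\bigcirc\varphi\wedge\bigcirc\psi$; C: $\bigcirc\varphi\wedge\bigcirc\square\varphi\to\square\bigcirc\varphi$; rules modus ponens, ${\rm Nec}_\square$, ${\rm Nec}_\bigcirc$. $\mathbf{K4C}$ is axiomatised by Taut, K, 4, ${\rm Next}_\neg$, ${\rm Next}_\wedge$, C and closed under these rules. A $T_D$ space is a topological space in which every singleton $\{x\}$ equals $U\cap F$ for some open $U$ and closed $F$. A dynamic topological system (DTS) is $\langle X,\tau,f\rangle$ with $f\colon X\to X$ continuous. The Cantor derivative $d(A)$ of $A\subseteq X$ is the set of $x$ in the closure of $A\setminus\{x\}$. Under a valuation $\nu\colon\mathsf{PV}\to\wp(X)$: $\|p\|=\nu(p)$,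 $\|\neg\varphi\|=X\setminus\|\varphi\|$, $\|\varphi\wedge\psi\|=\|\varphi\|\cap\|\psi\|$, $\|\square\varphi\|=X\setminus d(\|\neg\varphi\|)$, $\|\bigcirc\varphi\|=f^{-1}(\|\varphi\|)$. Valid on a DTS means the truth set is $X$ under every valuation. *)

(* Defs.v *)
From HB Require Import structures.
From mathcomp Require Import all_boot all_order.
From mathcomp Require Import boolp classical_sets topology.

Set Implicit Arguments.
Unset Strict Implicit.
Unset Printing Implicit Defensive.

Local Open Scope classical_set_scope.

Inductive form (PV : Type) : Type :=
| Var  : PV -> form PV
| And  : form PV -> form PV -> form PV
| Neg  : form PV -> form PV
| Box  : form PV -> form PV
| Next : form PV -> form PV.

Arguments Var {PV} _.
Arguments And {PV} _ _.
Arguments Neg {PV} _.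
Arguments Box {PV} _.
Arguments Next {PV} _.

Definition Imp {PV} (a b : form PV) : form PV := Neg (And a (Neg b)).
Definition Iff {PV} (a b : form PV) : form PV := And (Imp a b) (Imp b a).

Fixpoint beval {PV} (v : form PV -> bool) (a : form PV) : bool :=
  match a with
  | Var _ => v a
  | And b c => beval v b && beval v c
  | Neg b => ~~ beval v b
  | Box _ => v a
  | Next _ => v a
  end.

(* Taut: the formula is an instance of a classical propositional tautology. *)
Definition tautology {PV} (a : form PV) : Prop := forall v, beval v a = true.

Inductive K4C {PV : Type} : form PV -> Prop :=
| ax_taut : forall a, tautology a -> K4C a
| ax_K : forall a b, K4C (Imp (Box (Imp a b)) (Imp (Box a) (Box b)))
| ax_4 : forall a, K4C (Imp (Box a) (Box (Box a)))
| ax_next_neg : forall a, K4C (Iff (Neg (Next a)) (Next (Neg a)))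
| ax_next_and : forall a b, K4C (Iff (Next (And a b)) (And (Next a) (Next b)))
| ax_C : forall a, K4C (Imp (And (Next a) (Next (Box a))) (Box (Next a)))
| rule_mp : forall a b, K4C (Imp a b) -> K4C a -> K4C b
| rule_nec_box : forall a, K4C a -> K4C (Box a)
| rule_nec_next : forall a, K4C a -> K4C (Next a).

Definition cantor_deriv {X : topologicalType} (A : set X) : set X :=
  [set x | closure (A `\ x) x].

Definition T_D_space (X : topologicalType) : Prop :=
  forall x : X, exists U F : set X, open U /\ closed F /\ [set x] = U `&` F.

Fixpoint dsem {PV} {X : topologicalType} (f : X -> X) (nu : PV -> set X)
    (a : form PV) : set X :=
  match a with
  | Var p => nu p
  | And b c => dsem f nu b `&` dsem f nu c
  | Neg b => ~` dsem f nu b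
  | Box b => ~` cantor_deriv (~` dsem f nu b)
  | Next b => f @^-1` dsem f nu b
  end.

Definition valid_on {PV} {X : topologicalType} (f : X -> X) (a : form PV) : Prop :=
  forall nu : PV -> set X, dsem f nu a = setT.

(* Main.v *)
Require Import Defs.
From HB Require Import structures.
From mathcomp Require Import all_boot all_order.
From mathcomp Require Import boolp classical_sets topology.
From mathcomp Require Import zify.

Set Implicit Arguments.
Unset Strict Implicit.
Unset Printing Implicit Defensive.
Local Open Scope classical_set_scope.


Ltac taut := let v := fresh "v" in intro v; rewrite /Imp /Iff /=;
  repeat match goal with
  | |- context [beval v ?x] => destruct (beval v x)
  | |- context [v ?x] => destruct (v x)
  end; reflexivity.

Section Logic.
Variables (PV : Type) (p0 : PV).
Notation form := (form PV).
Notation thm := (@K4C PV).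

Definition Tt : form := Imp (Var p0) (Var p0).

Lemma thm_Tt : thm Tt. Proof. apply: ax_taut; taut. Qed.

Lemma taut_mp a b : tautology (Imp a b) -> thm a -> thm b.
Proof. by move=> H; apply: rule_mp; apply: ax_taut. Qed.

Lemma taut_mp2 a b c : tautology (Imp a (Imp b c)) -> thm a -> thm b -> thm c.
Proof. by move=> H Ha; apply: rule_mp; apply: rule_mp Ha; apply: ax_taut. Qed.

Fixpoint conj (l : seq form) : form :=
  match l with [::] => Tt | a :: l => And a (conj l) end.

Fixpoint subl (S : set form) (l : seq form) : Prop :=
  match l with [::] => True | a :: l => S a /\ subl S l end.

Definition consistent (S : set form) :=
  forall l, subl S l -> ~ thm (Neg (conj l)).

Definition MCS (G : set form) := consistent G /\ forall a, G a \/ G (Neg a).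

Lemma subl_mono (S T : set form) l : S `<=` T -> subl S l -> subl T l.
Proof. by move=> ST; elim: l => //= a l IH [Sa Sl]; split; [apply: ST|apply: IH]. Qed.

Lemma subl_cat S l1 l2 : subl S l1 -> subl S l2 -> subl S (l1 ++ l2).
Proof. by elim: l1 => //= a l IH [Sa Sl] S2; split => //; apply: IH. Qed.

Lemma conj_cat l1 l2 : thm (Iff (conj (l1 ++ l2)) (And (conj l1) (conj l2))).
Proof.
elim: l1 => [|a l IH] /=.
  by apply: ax_taut; taut.
by apply: taut_mp IH; taut.
Qed.

Lemma split_lem a (P : set form) l : subl (fun x => x = a \/ P x) l ->
  exists l', subl P l' /\ thm (Imp (And a (conj l')) (conj l)).
Proof.
elim: l => [|x l IH] /=.
  by move=> _; exists [::]; split => //; apply: ax_taut; taut.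
move=> [[->|Px] /IH [l' [Pl' H]]].
  by exists l'; split => //; apply: taut_mp H; taut.
exists (x :: l'); split => //=; apply: taut_mp H; taut.
Qed.

Lemma mcs_closed G l b : MCS G -> subl G l -> thm (Imp (conj l) b) -> G b.
Proof.
move=> [cG mG] Gl H; case: (mG b) => // Gnb.
exfalso; apply: (cG (Neg b :: l)) => //=.
by apply: taut_mp H; taut.
Qed.

Lemma mcs_thm G b : MCS G -> thm b -> G b.
Proof. by move=> mG H; apply: (mcs_closed (l := [::])) => //=; apply: taut_mp H; taut. Qed.

Lemma mcs_taut1 G a b : MCS G -> G a -> tautology (Imp a b) -> G b.
Proof.
move=> mG Ga H; apply: (mcs_closed (l := [:: a])) => //=.
by apply: taut_mp (ax_taut H); taut.
Qed.

Lemma mcs_taut2 G a b c : MCS G -> G a -> G b -> tautology (Imp a (Imp b c)) -> G c.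
Proof.
move=> mG Ga Gb H; apply: (mcs_closed (l := [:: a; b])) => //=.
by apply: taut_mp (ax_taut H); taut.
Qed.

Lemma mcs_mp G a b : MCS G -> G (Imp a b) -> G a -> G b.
Proof. by move=> mG H1 H2; apply: (mcs_taut2 mG H1 H2); taut. Qed.

Lemma mcs_thm_mp G a b : MCS G -> thm (Imp a b) -> G a -> G b.
Proof. by move=> mG H1 H2; apply: (mcs_mp mG _ H2); apply: mcs_thm. Qed.

Lemma mcs_neg G a : MCS G -> G (Neg a) <-> ~ G a.
Proof.
move=> mG; split.
  move=> Gna Ga; case: mG => cG _; apply: (cG [:: a; Neg a]) => //=.
  by apply: ax_taut; taut.
by case: mG => _ /(_ a) [].
Qed.

Lemma mcs_and G a b : MCS G -> G (And a b) <-> G a /\ G b.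
Proof.
move=> mG; split.
  by move=> H; split; apply: (mcs_taut1 mG H); taut.
by case=> Ga Gb; apply: (mcs_taut2 mG Ga Gb); taut.
Qed.

Lemma incons_ex S : ~ consistent S -> exists l, subl S l /\ thm (Neg (conj l)).
Proof.
move=> H; apply: contrapT => H2; apply: H => l Sl Hl; apply: H2; by exists l.
Qed.

Lemma lindenbaum S : consistent S -> exists G, MCS G /\ S `<=` G.
Proof.
move=> cS.
have ZB := @Zorn_bigcup form (fun A => consistent (S `|` A)).
have [A [PA Amax]] : exists A, consistent (S `|` A) /\ forall B, A `<` B -> ~ consistent (S `|` B).
  apply: ZB => F FP Ftot l Sl.
  suff [B [FB SB]] : exists B, (F B \/ B = set0) /\ subl (S `|` B) l.
    case: FB => [/FP|E]; first by apply.
    by apply: cS; apply: subl_mono SB => x; rewrite E => -[].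
  elim: l Sl => [|a l IH] /=.
    by move=> _; exists set0; split; [right|].
  move=> [Sa /IH [B [FB SB]]]; case: Sa => [Sa|[X FX Xa]].
    by exists B; split => //; split => //; left.
  case: FB => [FB|E].
    case: (Ftot X B FX FB) => XB.
      by exists B; split; [left|split => //; right; apply: XB].
    exists X; split; [left|split; [right|apply: subl_mono SB => x [|/XB]]] => //.
      by left.
    by right.
  exists X; split; [left|split; [right|apply: subl_mono SB => x]] => //.
  by rewrite E => -[|//]; left.
exists (S `|` A); split; last by move=> x Sx; left.
split => // a; apply: contrapT => /not_orP [nGa nGna].
have prop b : ~ (S `|` A) b -> A `<` A `|` [set b].
  move=> nb; split; first by move=> x Ax; left.
  by move=> /(_ b (or_intror erefl)) Ab; apply: nb; right.
have [l1 [Sl1 H1]] := incons_ex (Amax _ (prop _ nGa)).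
have [l2 [Sl2 H2]] := incons_ex (Amax _ (prop _ nGna)).
have [l1' [G1 E1]] := @split_lem a (S `|` A) l1
  (subl_mono (fun x => (fun H => match H with
     | or_introl s => or_intror (or_introl s)
     | or_intror (or_introl ax) => or_intror (or_intror ax)
     | or_intror (or_intror e) => or_introl e end)) Sl1).
have [l2' [G2 E2]] := @split_lem (Neg a) (S `|` A) l2
  (subl_mono (fun x => (fun H => match H with
     | or_introl s => or_intror (or_introl s)
     | or_intror (or_introl ax) => or_intror (or_intror ax)
     | or_intror (or_intror e) => or_introl e end)) Sl2).
have N1 : thm (Neg (And a (conj l1'))) by apply: taut_mp2 E1 H1; taut.
have N2 : thm (Neg (And (Neg a) (conj l2'))) by apply: taut_mp2 E2 H2; taut.
have N3 : thm (Neg (And (conj l1') (conj l2'))) by apply: taut_mp2 N1 N2; taut.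
apply: (PA (l1' ++ l2')); first exact: subl_cat.
by apply: taut_mp2 (conj_cat l1' l2') N3; taut.
Qed.

Definition gset (G : set form) : set form := fun a => G (Next a).

Lemma next_conj l : thm (Iff (Next (conj l)) (conj (map Next l))).
Proof.
elim: l => [|a l IH] /=.
  apply: taut_mp2 (rule_nec_next thm_Tt) thm_Tt; taut.
apply: taut_mp2 (ax_next_and a (conj l)) IH; taut.
Qed.

Lemma subl_map (f : form -> form) G l : subl (fun a => G (f a)) l -> subl G (map f l).
Proof. by elim: l => //= a l IH [Ha Hl]; split => //; apply: IH. Qed.

Lemma mcs_g G : MCS G -> MCS (gset G).
Proof.
move=> mG; split.
  move=> l Hl Hn.
  have H1 := rule_nec_next Hn.
  have H2 : thm (Neg (conj (map Next l))).
    have H3 : thm (Neg (Next (conj l))) by apply: taut_mp2 (ax_next_neg (conj l)) H1; taut.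
    by apply: taut_mp2 (next_conj l) H3; taut.
  by case: mG => cG _; apply: (cG _ (subl_map Hl)).
move=> a; case: (mG.2 (Next a)) => H; [by left|right].
rewrite /gset; apply: (mcs_thm_mp mG _ H).
by apply: taut_mp (ax_next_neg a); taut.
Qed.

Definition W := {G : set form | MCS G}.

Definition g (w : W) : W := exist _ (gset (proj1_sig w)) (mcs_g (proj2_sig w)).

Definition R (u v : W) := forall a, proj1_sig u (Box a) -> proj1_sig v a.

Lemma W_eq (u v : W) : proj1_sig u = proj1_sig v -> u = v.
Proof.
case: u v => [u pu] [v pv] /= E; subst v; congr exist; exact: Prop_irrelevance.
Qed.

Lemma R_trans u v w : R u v -> R v w -> R u w.
Proof.
move=> Ruv Rvw a Ha; apply: Rvw; apply: Ruv.
by apply: (mcs_thm_mp (proj2_sig u) (ax_4 a)).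
Qed.

Lemma box_conj l b : thm (Imp (conj l) b) -> thm (Imp (conj (map Box l)) (Box b)).
Proof.
elim: l b => [|a l IH] b /=.
  move=> H; have Hb : thm b by apply: rule_mp H thm_Tt.
  by apply: taut_mp (rule_nec_box Hb); taut.
move=> H; have H1 : thm (Imp (conj l) (Imp a b)) by apply: taut_mp H; taut.
have H2 := IH _ H1.
by apply: taut_mp2 (ax_K a b) H2; taut.
Qed.

Lemma exist_box (u : W) b : ~ proj1_sig u (Box b) -> exists v, R u v /\ ~ proj1_sig v b.
Proof.
move=> nb.
have cS : consistent (fun x => x = Neg b \/ proj1_sig u (Box x)).
  move=> l Sl Hl.
  have [l' [Pl' E]] := split_lem Sl.
  have H1 : thm (Imp (conj l') b) by apply: taut_mp2 E Hl; taut.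
  apply: nb; apply: (mcs_closed (proj2_sig u) (subl_map Pl') (box_conj H1)).
have [G [mG SG]] := lindenbaum cS.
exists (exist _ G mG); split => /=.
  by move=> a Ha; apply: SG; right.
by apply/(mcs_neg _ mG); apply: SG; left.
Qed.

Lemma box_R (u : W) b : proj1_sig u (Box b) <-> forall v, R u v -> proj1_sig v b.
Proof.
split; first by move=> H v Ruv; apply: Ruv.
move=> H; apply: contrapT => nb; have [v [Ruv nv]] := exist_box nb.
by apply: nv; apply: H.
Qed.

Lemma g_cont u v : R u v -> R (g u) (g v) \/ g u = g v.
Proof.
move=> Ruv; case: (pselect (R (g u) (g v))) => [|nR]; [by left|right].
have [c /not_implyP [Hc nc]] : exists c, ~ (proj1_sig (g u) (Box c) -> proj1_sig (g v) c).
  by apply: contrapT => H; apply: nR => c; apply: contrapT => H2; apply: H; exists c.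
have sub : forall x, proj1_sig (g u) x -> proj1_sig (g v) x.
  move=> x Hx; apply: contrapT => nx.
  pose th := Neg (And (Neg x) (Neg c)).
  have mu := proj2_sig (g u); have mv := proj2_sig (g v).
  have T1 : proj1_sig (g u) th by apply: (mcs_taut1 mu Hx); taut.
  have T2 : proj1_sig (g u) (Box th).
    apply: (mcs_thm_mp mu _ Hc).
    have Hc' : thm (Box (Imp c th)) by apply: rule_nec_box; apply: ax_taut; taut.
    exact: rule_mp (ax_K c th) Hc'.
  have T3 : proj1_sig u (Box (Next th)).
    apply: (mcs_thm_mp (proj2_sig u) (ax_C th)).
    by apply/(mcs_and _ _ (proj2_sig u)).
  have T4 : proj1_sig (g v) th := Ruv _ T3.
  have : proj1_sig (g v) (And (Neg x) (Neg c)).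
    by apply/(mcs_and _ _ mv); split; apply/(mcs_neg _ mv).
  by move/(mcs_neg _ mv): T4.
apply: W_eq; apply: funext => x; apply: propext; split; first exact: sub.
move=> Hx; apply: contrapT => nx.
have := sub _ ((mcs_neg _ (proj2_sig (g u))).2 nx).
by move/(mcs_neg _ (proj2_sig (g v))).
Qed.
End Logic.


Section Sound.
Variables (PV : Type) (X : topologicalType) (f : X -> X).
Hypotheses (fc : continuous f) (TD : T_D_space X).

Lemma dE (A : set X) x : cantor_deriv A x <->
  forall B, nbhs x B -> exists y, y <> x /\ A y /\ B y.
Proof.
rewrite /cantor_deriv /closure /=; split.
  by move=> H B /H [y [[Ay ny] By]]; exists y; split.
by move=> H B /H [y [ny [Ay By]]]; exists y; split.
Qed.

Lemma dsem_imp (nu : PV -> set X) a b x :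
  dsem f nu (Imp a b) x <-> (dsem f nu a x -> dsem f nu b x).
Proof.
rewrite /Imp /=; split.
  by move=> H Ha; apply: contrapT => nb; apply: H.
by move=> H [Ha nb]; apply: nb; apply: H.
Qed.

Lemma validE (a : form PV) : (forall nu x, dsem f nu a x) -> valid_on f a.
Proof. by move=> H nu; apply: funext => x; apply: propext; split. Qed.

Lemma beval_dsem nu x (a : form PV) :
  beval (fun b => `[< dsem f nu b x >]) a = `[< dsem f nu a x >].
Proof.
elim: a => //= [b IHb c IHc|b IHb].
  by rewrite IHb IHc asbool_and.
by rewrite IHb asbool_neg.
Qed.

Lemma d_not (A : set X) x : ~ cantor_deriv A x ->
  exists B, nbhs x B /\ forall y, y <> x -> B y -> ~ A y.
Proof.
move=> H; apply: contrapT => H2; apply: H; apply/dE => B nB.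
apply: contrapT => H3; apply: H2; exists B; split => // y ny By Ay.
by apply: H3; exists y.
Qed.

Lemma dd (A : set X) x : cantor_deriv (cantor_deriv A) x -> cantor_deriv A x.
Proof.
move=> H; apply/dE => B nB.
have [U [F [oU [cF E]]]] := TD x.
have [Ux Fx] : (U `&` F) x by rewrite -E.
rewrite nbhsE in nB; case: nB => N [oN Nx] NB.
have nNU : nbhs x (N `&` U).
  by apply: open_nbhs_nbhs; split; [exact: openI|split].
have [y [nyx [dAy [Ny Uy]]]] := (proj1 (dE _ _) H) _ nNU.
have nFy : ~ F y.
  by move=> Fy; apply: nyx; have : [set x] y by rewrite E.
have nM : nbhs y (N `&` U `&` ~` F).
  apply: open_nbhs_nbhs; split; last by split; [split|].
  by apply: openI; [exact: openI|exact: closed_openC].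
have [z [nzy [Az [[Nz Uz] nFz]]]] := (proj1 (dE _ _) dAy) _ nM.
exists z; split; last by split => //; apply: NB.
by move=> zx; apply: nFz; rewrite zx.
Qed.

Lemma sound (a : form PV) : K4C a -> valid_on f a.
Proof.
elim => {a}.
- move=> a Ta; apply: validE => nu x.
  have := Ta (fun b => `[< dsem f nu b x >]).
  by rewrite beval_dsem => /asboolP.
- move=> a b; apply: validE => nu x; apply/dsem_imp => H1; apply/dsem_imp => H2.
  move=> /= /dE H3; apply: H1; apply/dE => B nB.
  have [B2 [nB2 HB2]] := d_not H2.
  have [y [nyx [ny [By B2y]]]] := H3 _ (filterI nB nB2).
  exists y; split => //; split => //.
  move=> /dsem_imp H4; apply: ny; apply: H4.
  by apply: contrapT => nay; apply: (HB2 y).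
- move=> a; apply: validE => nu x; apply/dsem_imp => H1 /= H2; apply: H1.
  apply: dd; move: H2; congr cantor_deriv; apply: funext => y.
  by apply: propext; split => [/contrapT|H3 H4].
- move=> a; apply: validE => nu x /=.
  by split => -[H1 H2]; apply: H2.
- move=> a b; apply: validE => nu x /=.
  by split => -[H1 H2]; apply: H2.
- move=> a; apply: validE => nu x; apply/dsem_imp => -[/= fa nd] /dE H.
  have [B [nB HB]] := d_not nd.
  have nB' : nbhs x (f @^-1` B) by apply: fc.
  have [y [_ [nfy By]]] := H _ nB'.
  apply: nfy; rewrite /preimage /=; case: (pselect (f y = f x)) => [->//|ne].
  by apply: contrapT => nfy; apply: (HB (f y)).
- move=> a b _ Hab _ Ha nu; apply: funext => x; apply: propext; split => // _.
  have Hx : dsem f nu a x by rewrite (Ha nu).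
  have Hx2 : dsem f nu (Imp a b) x by rewrite (Hab nu).
  exact: (proj1 (dsem_imp _ _ _ _) Hx2 Hx).
- move=> a _ Ha nu; apply: funext => x; apply: propext; split => // _ /= H.
  have E : ~` dsem f nu a = set0.
    by apply: funext => y; apply: propext; split => //= H2; apply: H2; rewrite Ha.
  by move: H; rewrite /cantor_deriv /= E set0D closure0.
- move=> a _ Ha nu; apply: funext => x; apply: propext; split => // _ /=.
  by rewrite Ha.
Qed.
End Sound.


Section Model.
Variables (PV : Type) (p0 : PV).
Notation W := (W p0).

Fixpoint chain (a : W) (t : seq W) : Prop :=
  match t with [::] => True | b :: t' => R b a /\ chain b t' end.

Definition Xt := {p : W * seq W | chain p.1 p.2}.

Definition lst (x : Xt) := (sval x).1 :: (sval x).2.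
Definition hd (x : Xt) := (sval x).1.

Definition ext (x y : Xt) := exists zs, lst y = zs ++ lst x.
Definition sext (x y : Xt) := exists z zs, lst y = z :: zs ++ lst x.

Lemma Xt_eq (x y : Xt) : lst x = lst y -> x = y.
Proof.
case: x y => [[a t] px] [[b u] py]; rewrite /lst /= => -[E1 E2]; subst b u.
by congr exist; exact: Prop_irrelevance.
Qed.

Lemma ext_refl x : ext x x. Proof. by exists [::]. Qed.

Lemma ext_trans x y z : ext x y -> ext y z -> ext x z.
Proof. by move=> [zs1 E1] [zs2 E2]; exists (zs2 ++ zs1); rewrite E2 E1 catA. Qed.

Lemma ext_antisym x y : ext x y -> ext y x -> x = y.
Proof.
move=> [zs1 E1] [zs2 E2].
have S1 : size (lst y) = size zs1 + size (lst x) by rewrite E1 size_cat.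
have S2 : size (lst x) = size zs2 + size (lst y) by rewrite E2 size_cat.
have : size zs1 = 0 by lia.
by move/size0nil => E; apply: Xt_eq; rewrite E1 E.
Qed.

Lemma sext_ext x y : sext x y -> ext x y.
Proof. by move=> [z [zs E]]; exists (z :: zs). Qed.

Lemma sext_neq x y : sext x y -> x <> y.
Proof.
move=> [z [zs E]] xy; subst y.
have : size (lst x) = (size zs).+1 + size (lst x) by rewrite {1}E /= size_cat.
lia.
Qed.

Lemma ext_sext x y : ext x y -> x <> y -> sext x y.
Proof.
move=> [[|z zs] E] nxy; last by exists z, zs.
by exfalso; apply: nxy; apply: Xt_eq.
Qed.

Lemma chain_R a zs c u : chain a (zs ++ c :: u) -> R c a.
Proof.
elim: zs a => [|z zs IH] a /=; first by case.
by move=> [Rza /IH Rcz]; apply: R_trans Rcz Rza.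
Qed.

Lemma sext_R x y : sext x y -> R (hd x) (hd y).
Proof.
case: y => [[b u] py] [z [zs]]; rewrite /lst /hd /= => -[E1 E2]; subst b u.
by move: py => /=; apply: chain_R.
Qed.

Fixpoint Fl (a : W) (t : seq W) : W * seq W :=
  match t with
  | [::] => (g a, [::])
  | b :: t' => let p := Fl b t' in
      if pselect (g a = p.1) then p else (g a, p.1 :: p.2)
  end.

Lemma Fl1 a t : (Fl a t).1 = g a.
Proof. by case: t => //= b t; case: (pselect (g a = (Fl b t).1)). Qed.

Lemma Fl_chain a t : chain a t -> chain (Fl a t).1 (Fl a t).2.
Proof.
elim: t a => // b t IH a /= [Rba cb].
case: (pselect (g a = (Fl b t).1)) => [_|ne] /=; first exact: IH cb.
split; last exact: IH cb.
rewrite Fl1; rewrite Fl1 in ne.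
by case: (g_cont Rba) => // E; exfalso; apply: ne.
Qed.

Lemma Fl_ext a t zs c u : a :: t = zs ++ c :: u ->
  exists zs', (Fl a t).1 :: (Fl a t).2 = zs' ++ (Fl c u).1 :: (Fl c u).2.
Proof.
elim: zs a t => [|z zs IH] a t /=.
  by move=> [-> ->]; exists [::].
case: t => [|b t] [Ea Et].
  by move/(f_equal size): Et; rewrite size_cat /=; lia.
have [zs' E] := IH _ _ Et.
rewrite /=; case: (pselect (g a = (Fl b t).1)) => _ /=.
  by exists zs'.
by exists ((g a) :: zs'); rewrite E.
Qed.

Definition fX (x : Xt) : Xt := exist _ (Fl (sval x).1 (sval x).2) (Fl_chain (svalP x)).

Lemma fX_ext x y : ext x y -> ext (fX x) (fX y).
Proof.
move=> [zs E]; have [zs' E'] := Fl_ext E.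
by exists zs'; rewrite /lst /fX /=.
Qed.

Lemma hd_fX x : hd (fX x) = g (hd x).
Proof. by rewrite /hd /fX /= Fl1. Qed.

Definition opX (U : set Xt) := forall x y, ext x y -> U x -> U y.

Lemma opXT : opX setT. Proof. by []. Qed.
Lemma opXI : setI_closed opX.
Proof. by move=> A B oA oB x y exy [Ax Bx]; split; [apply: (oA x)|apply: (oB x)]. Qed.
Lemma opXU (I : Type) (F : I -> set Xt) : (forall i, opX (F i)) -> opX (\bigcup_i F i).
Proof. by move=> H x y exy [i _ Fx]; exists i => //; apply: (H i x). Qed.
End Model.

HB.instance Definition _ (PV : Type) (p0 : PV) := gen_eqMixin (Xt p0).
HB.instance Definition _ (PV : Type) (p0 : PV) := gen_choiceMixin (Xt p0).
HB.instance Definition _ (PV : Type) (p0 : PV) :=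
  isOpenTopological.Build (Xt p0) (@opXT PV p0) (@opXI PV p0) (@opXU PV p0).

Section Complete.
Variables (PV : Type) (p0 : PV).
Notation X := (Xt p0).

Lemma openX (U : set X) : open U <-> opX U.
Proof. by []. Qed.

Lemma d_char (A : set X) x : cantor_deriv A x <-> exists y, sext x y /\ A y.
Proof.
rewrite /cantor_deriv /closure /=; split.
  move=> H; have nB : nbhs x (ext x).
    rewrite nbhsE; exists (ext x) => //; split; last exact: ext_refl.
    by apply/openX => y z eyz exy; apply: ext_trans exy eyz.
  have [y [[Ay nyx] exy]] := H _ nB.
  by exists y; split => //; apply: ext_sext => // E; apply: nyx; rewrite E.
move=> [y [sxy Ay]] B; rewrite nbhsE => -[C [/openX oC Cx] CB].
exists y; split; last by apply: CB; apply: (oC x) => //; apply: sext_ext.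
by split => // E; apply: (sext_neq sxy); rewrite E.
Qed.

Lemma fX_cont : continuous (@fX PV p0).
Proof.
apply/continuousP => A /openX oA; apply/openX => x y exy Afx.
exact: (oA _ _ (fX_ext exy)).
Qed.

Lemma X_TD : T_D_space X.
Proof.
move=> x; exists (ext x), (fun y => ext y x); split.
  by apply/openX => y z eyz exy; apply: ext_trans exy eyz.
split.
  rewrite -openC; apply/openX => y z eyz nyx ezx.
  by apply: nyx; apply: ext_trans eyz ezx.
apply: funext => y; apply: propext; split.
  by move=> ->; split; apply: ext_refl.
by move=> [H1 H2]; apply: ext_antisym.
Qed.

Definition nuX (p : PV) : set X := fun x => sval (hd x) (Var p).

Lemma truth (a : form PV) x : dsem (@fX PV p0) nuX a x <-> sval (hd x) a.
Proof.
elim: a x => [p|a IHa b IHb|a IHa|a IHa|a IHa] x /=.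
- by [].
- rewrite IHa IHb; symmetry; exact: mcs_and _ _ (svalP (hd x)).
- rewrite IHa; symmetry; exact: mcs_neg _ (svalP (hd x)).
- have E : dsem (@fX PV p0) nuX a = fun y => sval (hd y) a.
    by apply: funext => y; apply: propext.
  rewrite E box_R; split.
    move=> H v Ruv; apply: contrapT => nv; apply: H; apply/d_char.
    have cy : chain v (hd x :: (sval x).2) by split => //; exact: (svalP x).
    exists (exist _ (v, hd x :: (sval x).2) cy); split => //.
    by exists v, [::].
  move=> H /d_char [y [sxy ny]]; apply: ny; apply: H.
  exact: sext_R.
- rewrite /preimage /= IHa hd_fX; by [].
Qed.

Lemma complete (a : form PV) :
  (forall (Y : topologicalType) (f : Y -> Y), continuous f -> T_D_space Y -> valid_on f a) ->
  K4C a.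
Proof.
move=> H; apply: contrapT => na.
have cS : consistent p0 (fun x => x = Neg a).
  move=> l Sl Hl.
  have [l' [Pl' E]] := @split_lem _ p0 (Neg a) set0 l
    (subl_mono (fun x (Hx : x = Neg a) => or_introl Hx) Sl).
  case: l' Pl' E => [_ E|y l'' [Py _]]; last by case: Py.
  by apply: na; apply: taut_mp2 E Hl; taut.
have [G [mG SG]] := lindenbaum cS.
pose w : W p0 := exist _ G mG.
have cx : chain w [::] by [].
pose x : X := exist _ (w, [::]) cx.
have := f_equal (fun S : set X => S x) (H X (@fX PV p0) fX_cont X_TD nuX).
rewrite /= => E.
have : dsem (@fX PV p0) nuX a x by rewrite E.
move/truth; rewrite /hd /=; apply/(mcs_neg _ mG).
by apply: SG.
Qed.
End Complete.


Theorem mainTheorem5 (PV : Type) (p0 : PV) (phi : form PV) :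
  K4C phi <->
  (forall (X : topologicalType) (f : X -> X),
      continuous f -> T_D_space X -> valid_on f phi).
Proof.
split.
  by move=> H X f fc TD; exact: (sound fc TD H).
exact: complete p0 phi.
Qed.
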